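(* Let $(X,\mathcal{A},\mu)$ be a probability space and $\theta$ a measure-preserving endomorphism. Let $\varphi,\psi:X\to\mathbb{R}$ be bounded ceiling functions and let $A\subset X$ be a hole for which the escape rates $\rho(A,\varphi)$ and $\rho(A,\psi)$ exist. Then: (1) If $\varphi\le\psi$, then $\rho(A,\varphi)\ge\rho(A,\psi)$. (2) For all $\lambda>0$, $\rho(A,\lambda\varphi)=\lambda^{-1}\rho(A,\varphi)$. (3) If there is a bounded measurable $\chi:X\to\mathbb{R}$ with $\psi=\varphi+\chi\circ\theta-\chi$, then $\rho(A,\psi)=\rho(A,\varphi)$.
   Context: A ceiling function is a measurable $\varphi:X\to\mathbb{R}$ with $\inf\varphi>0$. $S_n\varphi=\sum_{k=0}^{n-1}\varphi\circ\theta^k$, $N_t^\varphi(x)=\min\{n\in\mathbb{N}_0:S_n\varphi(x)>t\}$. The special flow over $\theta$ under $\varphi$: $\overline{X}_\varphi=\{(x,s):0\le s<\varphi(x)\}$ with $\overline{\mu}_\varphi$ the restriction of $\mu\otimes$Lebesgue, $\Phi^\varphi_t(x,s)=(x,s+t)$ if $t<\varphi(x)-s$ and $\Phi^\varphi_t(x,s)=(\theta^{N-1}x,s+t-S_{N-1}\varphi(x))$, $N=N^\varphi_{s+t}(x)$, otherwise. A hole $A\subset X$ is a measurable set with $\bigcup_{n\ge0}\theta^{-n}(A)=X$ a.e. The escape rate $\rho(A,\varphi)$ is $\lim_{t\to\infty}-\frac1t\log\overline{\mu}_\varphi(\{(x,s)\in\overline{X}_\varphi:\forall\tau\in[0,t]:\Phi^\varphi_\tau(x,s)\notin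 A\times\mathbb{R}\})$ when the limit exists. *)

(* Defs.v *)
From HB Require Import structures.
From mathcomp Require Import all_boot all_order all_algebra.
From mathcomp Require Import all_classical all_reals all_analysis.
Set Implicit Arguments. Unset Strict Implicit. Unset Printing Implicit Defensive.
Import Order.TTheory GRing.Theory Num.Theory.
Import numFieldNormedType.Exports.
Local Open Scope classical_set_scope.
Local Open Scope ring_scope.

Section SpecialFlow.
Context {d : measure_display} {X : measurableType d} {R : realType}.

Definition ceiling (phi : X -> R) : Prop :=
  measurable_fun setT phi /\ exists c : R, 0 < c /\ forall x, c <= phi x.

Definition measure_preserving (mu : set X -> \bar R) (theta : X -> X) : Prop :=
  measurable_fun setT theta /\
  forall B, measurable B -> mu (theta @^-1` B) = mu B.

Definition birkhoff_sum (theta : X -> X) (phi : X -> R) (n : nat) (x : X) : R :=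
  \sum_(0 <= k < n) phi (iter k theta x).

(* N_t^phi(x) = min { n : S_n phi x > t } (0 if no such n: never happens
   for a ceiling function) *)
Definition hit_count (theta : X -> X) (phi : X -> R) (t : R) (x : X) : nat :=
  match pselect (exists n, t < birkhoff_sum theta phi n x) with
  | left h => ex_minn h
  | right _ => 0%N
  end.

Definition special_flow (theta : X -> X) (phi : X -> R) (t : R) (p : X * R)
  : X * R :=
  let x := p.1 in let s := p.2 in
  if t < phi x - s then (x, s + t)
  else let N := hit_count theta phi (s + t) x in
       (iter N.-1 theta x, s + t - birkhoff_sum theta phi N.-1 x).

Definition flow_space (phi : X -> R) : set (X * R) :=
  [set p | 0 <= p.2 /\ p.2 < phi p.1].

Definition flow_measure (mu : set X -> \bar R) (phi : X -> R)
  (B : set (X * R)) : \bar R :=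
  (mu \x (@lebesgue_measure R))%E (flow_space phi `&` B).

Definition survivor_set (theta : X -> X) (phi : X -> R) (A : set X) (t : R)
  : set (X * R) :=
  [set p | flow_space phi p /\
     forall tau, 0 <= tau <= t ->
       ~ (A `*` [set: R]) (special_flow theta phi tau p)].

Definition survival (mu : set X -> \bar R) (theta : X -> X) (phi : X -> R)
  (A : set X) (t : R) : R :=
  fine (flow_measure mu phi (survivor_set theta phi A t)).

Definition escape_fun (mu : set X -> \bar R) (theta : X -> X) (phi : X -> R)
  (A : set X) (t : R) : R :=
  - (t^-1 * ln (survival mu theta phi A t)).

Definition hole (mu : set X -> \bar R) (theta : X -> X) (A : set X) : Prop :=
  measurable A /\
  mu.-negligible (~` \bigcup_n ((iter n theta) @^-1` A)).

Definition escape_rate_exists (mu : set X -> \bar R) (theta : X -> X)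
  (phi : X -> R) (A : set X) : Prop :=
  (\forall t \near +oo%R, 0 < survival mu theta phi A t) /\
  cvg (escape_fun mu theta phi A t @[t --> +oo%R]).

Definition escape_rate (mu : set X -> \bar R) (theta : X -> X)
  (phi : X -> R) (A : set X) : R :=
  lim (escape_fun mu theta phi A t @[t --> +oo%R]).

End SpecialFlow.

(* Main.v *)
Require Import Defs.
From HB Require Import structures.
From mathcomp Require Import all_boot all_order all_algebra.
From mathcomp Require Import all_classical all_reals all_analysis.
From mathcomp Require Import measurable_realfun.
From mathcomp Require Import ring lra.
Import Order.TTheory GRing.Theory Num.Theory.
Import numFieldNormedType.Exports.
Local Open Scope classical_set_scope.
Local Open Scope ring_scope.

Lemma leb_scale {R : realType} (r : R) (B : set (measurableTypeR R)) :
  0 < r -> measurable B ->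
  lebesgue_measure ((fun s : measurableTypeR R => r^-1 * s) @^-1` B) =
  (r%:E * lebesgue_measure B)%E.
Proof.
move=> r0 mB.
have r'0 : 0 <= r^-1 by rewrite invr_ge0 ltW.
pose f : measurableTypeR R -> measurableTypeR R := fun s => r^-1 * s.
have mf : measurable_fun setT f by exact: mulrl_measurable.
have h : lebesgue_measure B = ((r^-1)%:E * lebesgue_measure (f @^-1` B))%E.
  refine (@lebesgue_measure_unique R (mscale (NngNum r'0) (pushforward lebesgue_measure f)) _ B mB).
  move=> _ [[a b] _ <-]; change (lebesgue_measure `]a, b]%classic = ((r^-1)%:E * lebesgue_measure (f @^-1` `]a, b]%classic))%E).
  have -> : f @^-1` `]a, b]%classic = `]r * a, r * b]%classic.
    apply/seteqP; split => x /=; rewrite !in_itv /= /f.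
      by rewrite ltr_pdivlMl // ler_pdivrMl //.
    by rewrite ltr_pdivlMl // ler_pdivrMl //.
  rewrite !lebesgue_measure_itv /= !lte_fin ltr_pM2l //.
  case: ifP => _; last by rewrite mule0.
  rewrite -EFinD -EFinM mulrBr !mulrA mulVf ?gt_eqF // !mul1r.
  by [].
Unshelve. all: try exact mf.
by rewrite h muleA -EFinM divff ?gt_eqF // mul1e.
Qed.

Lemma prod_scale d (X : measurableType d) {R : realType}
  (mu : {measure set X -> \bar R}) (r : R) (E : set (X * measurableTypeR R)) :
  0 < r -> measurable E ->
  (mu \x (@lebesgue_measure R))%E ((fun p : X * measurableTypeR R => (p.1, r^-1 * p.2)) @^-1` E) =
  (r%:E * (mu \x (@lebesgue_measure R)) E)%E.
Proof.
move=> r0 mE; rewrite /product_measure1 /=.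
rewrite -ge0_integralZl //; first last.
all: try (by move=> x _; exact: measure_ge0).
all: try (exact: measurable_fun_xsection).
all: try (by rewrite lee_fin ltW).
apply: eq_integral => x _ /=.
rewrite -leb_scale //; try exact: measurable_xsection.
Qed.

Section Comb.
Context {d : measure_display} {X : measurableType d} {R : realType}.
Variables (theta : X -> X) (phi : X -> R).

Lemma bs0 x : birkhoff_sum theta phi 0 x = 0.
Proof. by rewrite /birkhoff_sum big_geq. Qed.

Lemma bsS n x : birkhoff_sum theta phi n.+1 x =
  birkhoff_sum theta phi n x + phi (iter n theta x).
Proof. by rewrite /birkhoff_sum big_nat_recr. Qed.

Variable c : R.
Hypothesis c0 : 0 < c.
Hypothesis phic : forall y, c <= phi y.

Lemma bs_lb n x : n%:R * c <= birkhoff_sum theta phi n x.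
Proof.
elim: n => [|n IH]; first by rewrite bs0 mul0r.
by rewrite bsS -natr1 mulrDl mul1r lerD.
Qed.

Lemma bs_lt m n x : (m < n)%N -> birkhoff_sum theta phi m x < birkhoff_sum theta phi n x.
Proof.
elim: n => [//|n IH]; rewrite ltnS leq_eqVlt => /orP [/eqP ->|/IH h].
  by rewrite bsS ltrDl (lt_le_trans c0).
by rewrite bsS (lt_trans h) // ltrDl (lt_le_trans c0).
Qed.

Lemma bs_le m n x : (m <= n)%N -> birkhoff_sum theta phi m x <= birkhoff_sum theta phi n x.
Proof.
by rewrite leq_eqVlt => /orP [/eqP ->//|/(bs_lt _ _ x) /ltW].
Qed.

Lemma hit_ex u x : exists n, u < birkhoff_sum theta phi n x.
Proof.
exists (Num.bound (`|u| / c)).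
apply: (le_lt_trans (ler_norm u)); apply: (lt_le_trans _ (bs_lb _ _)).
rewrite -ltr_pdivrMr //; apply: archi_boundP; apply: divr_ge0 => //; exact: ltW.
Qed.

Lemma hit_spec u x : 0 <= u ->
  [/\ (0 < hit_count theta phi u x)%N,
      u < birkhoff_sum theta phi (hit_count theta phi u x) x &
      forall m, (m < hit_count theta phi u x)%N -> birkhoff_sum theta phi m x <= u].
Proof.
move=> u0; rewrite /hit_count; case: pselect => [h|/(_ (hit_ex u x))//].
case: ex_minnP => N HN Hmin; split => //.
- by rewrite lt0n; apply/eqP => N0; move: HN; rewrite N0 bs0 ltNge u0.
- move=> m mN; rewrite leNgt; apply/negP => /Hmin; by rewrite leqNgt mN.
Qed.

Lemma hit_unique u x k : birkhoff_sum theta phi k x <= u ->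
  u < birkhoff_sum theta phi k.+1 x -> hit_count theta phi u x = k.+1.
Proof.
move=> h1 h2; have u0 : 0 <= u by apply: le_trans h1; rewrite -(bs0 x) bs_le.
have [N0 HN Hm] := hit_spec _ x u0.
apply/eqP; rewrite eqn_leq; apply/andP; split.
  rewrite leqNgt; apply/negP => /Hm; by rewrite leNgt h2.
rewrite ltnNge; apply/negP => Nk.
by move: HN; rewrite ltNge (le_trans (bs_le _ _ x Nk) h1).
Qed.

Lemma flow_fst x s tau : 0 <= s -> s < phi x -> 0 <= tau ->
  (special_flow theta phi tau (x, s)).1 =
  iter (hit_count theta phi (s + tau) x).-1 theta x.
Proof.
move=> s0 sphi t0; rewrite /special_flow /=; case: ifP => // h.
rewrite (@hit_unique _ _ 0) //.
  by rewrite bs0; exact: addr_ge0.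
rewrite (bsS 0) bs0 add0r /=.
by rewrite addrC -ltrBrDr.
Qed.

Definition Gset (A : set X) (t : R) : set (X * R) :=
  [set p | flow_space phi p /\
     forall k, birkhoff_sum theta phi k p.1 <= p.2 + t -> ~ A (iter k theta p.1)].

Lemma survivorE A t : 0 <= t -> survivor_set theta phi A t = Gset A t.
Proof.
move=> t0; apply/seteqP; split => -[x s] /= [[s0 sphi] H]; split => //.
- move=> k hk hA.
  pose u := Num.max (birkhoff_sum theta phi k x) s.
  have hu : hit_count theta phi (s + (u - s)) x = k.+1.
    rewrite addrC subrK; apply: hit_unique; first by rewrite le_max lexx.
    rewrite gt_max; apply/andP; split; first exact: bs_lt.
    apply: (lt_le_trans sphi); apply: le_trans (bs_le _ _ x (ltn0Sn k)).
    by rewrite (bsS 0) bs0 add0r.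
  have h1 : 0 <= u - s by rewrite subr_ge0 le_max lexx orbT.
  have h2 : u - s <= t.
    by rewrite lerBlDl ge_max hk lerDl t0.
  apply: (H (u - s)); first by rewrite h1 h2.
  split => //; by rewrite flow_fst // hu.
- move=> tau /andP [tau0 taut] [hA _]; move: hA.
  rewrite flow_fst //; apply: H.
  have [N0 _ Hm] := hit_spec _ x (addr_ge0 s0 tau0).
  apply: le_trans (Hm _ _) _; first by rewrite prednK.
  by rewrite lerD2l.
Qed.

End Comb.

Section Meas.
Context {d : measure_display} {X : measurableType d} {R : realType}.
Local Notation XR := (X * measurableTypeR R)%type.

Lemma msnd : measurable_fun setT (snd : XR -> R).
Proof. exact: measurable_snd. Qed.

Lemma mle0 (h : XR -> R) : measurable_fun setT h -> measurable [set p | 0 <= h p].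
Proof.
move=> mh; have := mh measurableT _ (measurable_itv `[0, +oo[).
rewrite setTI (_ : h @^-1` _ = [set p | 0 <= h p]) //.
by apply/seteqP; split => p /=; rewrite in_itv /= andbT.
Qed.

Lemma mlt0 (h : XR -> R) : measurable_fun setT h -> measurable [set p | 0 < h p].
Proof.
move=> mh; have := mh measurableT _ (measurable_itv `]0, +oo[).
rewrite setTI (_ : h @^-1` _ = [set p | 0 < h p]) //.
by apply/seteqP; split => p /=; rewrite in_itv /= andbT.
Qed.

Variables (theta : X -> X) (phi : X -> R).
Hypothesis mtheta : measurable_fun setT theta.
Hypothesis mphi : measurable_fun setT phi.

Lemma miter k : measurable_fun setT (iter k theta).
Proof.
elim: k => [|k IH]; first exact: measurable_id.
exact: (measurableT_comp mtheta IH).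
Qed.

Lemma mbs k : measurable_fun setT (birkhoff_sum theta phi k).
Proof.
elim: k => [|k IH].
  rewrite (_ : birkhoff_sum theta phi 0 = cst 0); first exact: measurable_cst.
  by apply/funext => x; rewrite bs0.
rewrite (_ : birkhoff_sum theta phi k.+1 =
  (fun x => birkhoff_sum theta phi k x + phi (iter k theta x))); last first.
  by apply/funext => x; rewrite bsS.
apply: measurable_funD => //; exact: (measurableT_comp mphi (miter k)).
Qed.

Lemma mGset (A : set X) t : measurable A -> measurable (Gset theta phi A t : set XR).
Proof.
move=> mA.
have mfst : measurable_fun setT (fst : XR -> X) by exact: measurable_fst.
rewrite (_ : Gset theta phi A t = ([set p | 0 <= p.2] `&` [set p : XR | 0 < phi p.1 - p.2]) `&`
  \bigcap_k ([set p : XR | 0 < birkhoff_sum theta phi k p.1 - (p.2 + t)] `|`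
      (setT `&` (fun p : XR => iter k theta p.1) @^-1` (~` A)))); last first.
  apply/seteqP; split => -[x s] /=.
    move=> [[s0 sx] H]; split; first by rewrite subr_gt0.
    move=> k _ /=; have [hk|hk] := leP (birkhoff_sum theta phi k x) (s + t).
      by right; split => //; exact: H.
    by left; rewrite subr_gt0.
  move=> [[s0 sx] H]; split; first by split => //; rewrite -subr_gt0.
  move=> k hk; have [|[_ //]] := H k I.
  by rewrite /= subr_gt0 ltNge hk.
apply: measurableI; first apply: measurableI.
- exact: (mle0 _ msnd).
- apply: mlt0; apply: measurable_funB => //; exact: (measurableT_comp mphi mfst).
- apply: bigcapT_measurable => k; apply: measurableU.
    apply: mlt0; apply: measurable_funB.
      exact: (measurableT_comp (mbs k) mfst).
    apply: measurable_funD => //; exact: msnd.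
  apply: (measurableT_comp (miter k) mfst) => //; exact: measurableC.
Qed.

End Meas.

Section An.
Context {R : realType}.
Definition Ef (h : R -> R) (t : R) : R := - (t^-1 * ln (h t)).

Lemma inv_cvg0 : t^-1 @[t --> +oo] --> (0:R).
Proof.
apply/cvgrPdist_lt => e e0; near=> t.
have t0 : 0 < t by near: t; apply: nbhs_pinfty_gt; rewrite num_real.
rewrite sub0r normrN ger0_norm ?invr_ge0 ?ltW //.
rewrite invf_plt ?posrE //.
by near: t; apply: nbhs_pinfty_gt; rewrite num_real.
Unshelve. all: end_near.
Qed.

Lemma rate_le (f g : R -> R) (r K : R) : 0 < r -> 0 <= K ->
  (\forall t \near +oo, 0 < f t) -> (\forall t \near +oo, 0 < g t) ->
  (\forall t \near +oo, r * g (t + K) <= f t) ->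
  cvg (Ef g t @[t --> +oo]) -> cvg (Ef f t @[t --> +oo]) ->
  lim (Ef f t @[t --> +oo]) <= lim (Ef g t @[t --> +oo]).
Proof.
move=> r0 K0 fp gp hfg cg cf.
set l := lim (Ef g t @[t --> +oo]).
pose H t := - (t^-1 * ln r) + (1 + K * t^-1) * Ef g (t + K).
have HE : H t @[t --> +oo] --> l.
  have -> : l = - (0 * ln r) + (1 + K * 0) * l by rewrite mul0r oppr0 add0r mulr0 addr0 mul1r.
  have h1 : (fun t => t^-1 * ln r) @ +oo --> 0 * ln r.
    by apply: cvgM; [exact: inv_cvg0|exact: cvg_cst].
  have h2 : (fun t => 1 + K * t^-1) @ +oo --> 1 + K * 0.
    apply: cvgD; first exact: cvg_cst.
    exact: (@cvgM _ _ _ _ (fun _ => K) (fun t => t^-1) K 0 (cvg_cst K) inv_cvg0).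
  have h3 : (fun t => Ef g (t + K)) @ +oo --> l.
    by rewrite (cvg_shiftr K (fun t => Ef g t)).
  exact: (cvgD (cvgN h1) (cvgM h2 h3)).
rewrite -(cvg_lim _ HE) //; apply: ler_lim => //; first by apply/cvg_ex; exists l.
have gpK : \forall t \near +oo, 0 < g (t + K).
  have := cvg_addrr K gp. exact.
near=> t.
have t0 : 0 < t by near: t; apply: nbhs_pinfty_gt; rewrite num_real.
have tK : 0 < t + K by rewrite ltr_wpDr.
have g0 : 0 < g (t + K) by near: t.
have f0 : 0 < f t by near: t.
have hle : r * g (t + K) <= f t by near: t.
rewrite /H /Ef.
have -> : (1 + K * t^-1) * - ((t + K)^-1 * ln (g (t + K))) = - (t^-1 * ln (g (t + K))).
  field; rewrite ?gt_eqF //.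
rewrite -opprD -mulrDr lerN2 ler_pM2l ?invr_gt0 //.
rewrite -lnM ?posrE ?mulr_gt0 //.
by rewrite ler_ln ?posrE ?mulr_gt0.
Unshelve. all: end_near.
Qed.

Lemma rate_scale (f g : R -> R) (lam : R) : 0 < lam ->
  (forall t, 0 <= t -> g t = lam * f (t / lam)) ->
  (\forall t \near +oo, 0 < f t) -> cvg (Ef f t @[t --> +oo]) ->
  (\forall t \near +oo, 0 < g t) /\
  Ef g t @[t --> +oo] --> lam^-1 * lim (Ef f t @[t --> +oo]).
Proof.
move=> l0 hg fp cf.
have hd : (t / lam) @[t --> +oo] --> +oo.
  apply/cvgryPge => A; near=> t.
  rewrite ler_pdivlMr //; near: t; apply: nbhs_pinfty_ge; rewrite num_real.
have fpd : \forall t \near +oo, 0 < f (t / lam).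
  have := hd _ fp. exact.
have tp : \forall t \near +oo, 0 < (t : R) by apply: nbhs_pinfty_gt; rewrite num_real.
split.
  near=> t; rewrite hg; last by apply: ltW; near: t.
  by rewrite mulr_gt0 //; near: t.
set l := lim (Ef f t @[t --> +oo]).
have cfd : (fun t => Ef f (t / lam)) @ +oo --> l.
  have := cvg_comp _ _ hd cf. exact.
have h1 : (fun t => t^-1 * ln lam) @ +oo --> 0 * ln lam.
  by apply: cvgM; [exact: inv_cvg0|exact: cvg_cst].
have h2 : (fun t => - (t^-1 * ln lam) + lam^-1 * Ef f (t / lam)) @ +oo -->
   - (0 * ln lam) + lam^-1 * l.
  exact: (cvgD (cvgN h1) (cvgM (cvg_cst lam^-1) cfd)).
rewrite mul0r oppr0 add0r in h2.
apply: cvg_trans h2; apply: near_eq_cvg; near=> t.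
have t0 : 0 < t by near: t.
have f0 : 0 < f (t / lam) by near: t.
rewrite /Ef hg ?ltW // lnM ?posrE //.
field; rewrite ?gt_eqF //.
Unshelve. all: end_near.
Qed.

End An.

Lemma bnd_ex {T : Type} {R : realType} (f : T -> R) : bounded_fun f ->
  exists M, 0 <= M /\ forall x, `|f x| <= M.
Proof.
move=> [M0 [_ HM]]; exists (Num.max (M0 + 1) 0); split; first by rewrite le_max lexx orbT.
move=> x; apply: le_trans (HM (M0 + 1) _ x I) _; first by rewrite ltrDl.
by rewrite le_max lexx.
Qed.

Section Main.
Context {d : measure_display} {X : measurableType d} {R : realType}.
Variable mu : probability X R.
Variable theta : X -> X.
Local Notation XR := (X * measurableTypeR R)%type.
Local Notation m := (mu \x (@lebesgue_measure R))%E.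

Lemma survE (phi : X -> R) (c : R) (A : set X) (t : R) : 0 < c -> (forall y, c <= phi y) -> 0 <= t ->
  survival mu theta phi A t = fine (m (Gset theta phi A t)).
Proof.
move=> c0 hc t0; rewrite /survival /flow_measure (@survivorE _ _ _ theta phi c c0 hc A t t0).
by rewrite setIidr // => p [].
Qed.

Lemma mpre r (E : set XR) : measurable E ->
  measurable ((fun p : XR => (p.1, r^-1 * p.2)) @^-1` E).
Proof.
move=> mE; rewrite -[X in measurable X]setTI.
have mg : measurable_fun setT (fun p : XR => (r^-1 * p.2 : measurableTypeR R)).
  apply: (@measurableT_comp _ _ _ _ _ _ (fun s : measurableTypeR R => (r^-1 * s : measurableTypeR R))); last exact: measurable_snd.
  exact: mulrl_measurable.
exact: (measurable_fun_pair measurable_fst mg) measurableT E mE.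
Qed.

Lemma fine_scale (r : R) (e : \bar R) : 0 < r -> fine (r%:E * e)%E = r * fine e.
Proof.
move=> r0; case: e => [x||] //=; rewrite ?mulr0 //.
  by rewrite mulry gtr0_sg // mul1e.
by rewrite mulrNy gtr0_sg // mul1e.
Qed.

Lemma fin_of_pos (e : \bar R) : (0 <= e)%E -> 0 < fine e -> e \is a fin_num.
Proof. by case: e => [x||] //= _; rewrite ltxx. Qed.

Lemma surv_cmp (phi psi : X -> R) (cphi cpsi : R) (A : set X) (r K : R) :
  0 < cphi -> (forall y, cphi <= phi y) -> 0 < cpsi -> (forall y, cpsi <= psi y) ->
  measurable_fun setT theta -> measurable_fun setT phi -> measurable_fun setT psi ->
  measurable A -> 0 < r -> 0 <= K ->
  (forall t, 0 <= t -> (fun p : XR => (p.1, r^-1 * p.2)) @^-1` (Gset theta phi A (t + K))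
     `<=` Gset theta psi A t) ->
  (\forall t \near +oo, 0 < survival mu theta phi A t) ->
  (\forall t \near +oo, 0 < survival mu theta psi A t) ->
  \forall t \near +oo, r * survival mu theta phi A (t + K) <= survival mu theta psi A t.
Proof.
move=> cp0 hcp cq0 hcq mth mphi mpsi mA r0 K0 hsub pp pq.
have ppK : \forall t \near +oo, 0 < survival mu theta phi A (t + K).
  have := cvg_addrr K pp; exact.
near=> t.
have t0 : 0 <= t by near: t; apply: nbhs_pinfty_ge; rewrite num_real.
have tK : 0 <= t + K by rewrite addr_ge0.
have h1 : 0 < survival mu theta phi A (t + K) by near: t.
have h2 : 0 < survival mu theta psi A t by near: t.
move: h1 h2; rewrite (survE _ _ _ _ cp0 hcp tK) (survE _ _ _ _ cq0 hcq t0) => h1 h2.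
have mG1 := @mGset _ _ _ theta phi mth mphi A (t + K) mA.
have mG2 := @mGset _ _ _ theta psi mth mpsi A t mA.
have f1 := fin_of_pos _ (measure_ge0 _ _) h1.
have f2 := fin_of_pos _ (measure_ge0 _ _) h2.
rewrite -fine_scale //; apply: fine_le => //; first by rewrite fin_numM.
rewrite -prod_scale //; apply: le_measure; rewrite ?inE //; last exact: hsub.
exact: mpre.
Unshelve. all: end_near.
Qed.

Lemma bs_mono (phi psi : X -> R) k x : (forall y, phi y <= psi y) ->
  birkhoff_sum theta phi k x <= birkhoff_sum theta psi k x.
Proof. by move=> h; apply: ler_sum => i _. Qed.

Lemma bs_scale (phi : X -> R) (lam : R) k x :
  birkhoff_sum theta (fun y => lam * phi y) k x = lam * birkhoff_sum theta phi k x.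
Proof. by rewrite /birkhoff_sum mulr_sumr. Qed.

Lemma bs_coh (phi psi chi : X -> R) k x :
  (forall y, psi y = phi y + chi (theta y) - chi y) ->
  birkhoff_sum theta psi k x = birkhoff_sum theta phi k x + chi (iter k theta x) - chi x.
Proof.
move=> h; elim: k => [|k IH]; first by rewrite !bs0 add0r subrr.
rewrite !bsS IH h iterS; ring.
Qed.

Lemma Gset_scale (phi : X -> R) (A : set X) (lam t : R) : 0 < lam ->
  Gset theta (fun y => lam * phi y) A t =
  (fun p : XR => (p.1, lam^-1 * p.2)) @^-1` Gset theta phi A (t / lam).
Proof.
move=> l0; apply/seteqP; split => -[x s] /=.
  move=> [[h1 h2] H]; split; first split.
  - by rewrite mulr_ge0 // invr_ge0 ltW.
  - by rewrite ltr_pdivrMl.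
  - move=> k hk; apply: H; rewrite bs_scale; move: hk.
    by rewrite [t / lam]mulrC -mulrDr ler_pdivlMl.
move=> [[h1 h2] H]; split; first split.
- by move: h1; rewrite pmulr_rge0 // invr_gt0.
- by move: h2; rewrite ltr_pdivrMl.
- move=> k hk; apply: H.
  by rewrite [t / lam]mulrC -mulrDr ler_pdivlMl // -bs_scale.
Qed.

Lemma coh_sub (phi psi chi : X -> R) (A : set X) (Mphi cpsi B : R) :
  0 <= Mphi -> 0 < cpsi -> (forall y, phi y <= Mphi) -> (forall y, cpsi <= psi y) ->
  (forall y, `|chi y| <= B) ->
  (forall y, psi y = phi y + chi (theta y) - chi y) ->
  forall t, 0 <= t ->
  (fun p : XR => (p.1, (cpsi / (Mphi + cpsi))^-1 * p.2)) @^-1`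
     Gset theta phi A (t + (B + B)) `<=` Gset theta psi A t.
Proof.
move=> M0 c0 hM hc hB hpsi t t0 [x s] /= [[h1 h2] H].
set r := cpsi / (Mphi + cpsi).
have Mc : 0 < Mphi + cpsi by rewrite ltr_wpDl.
have r0 : 0 < r by rewrite divr_gt0.
have r1 : r <= 1 by rewrite ler_pdivrMr // mul1r lerDr.
have rM : r * Mphi <= cpsi.
  apply: (@le_trans _ _ (r * (Mphi + cpsi))); first by rewrite ler_pM2l // lerDl ltW.
  by rewrite /r divfK // gt_eqF.
have es : s = r * (r^-1 * s) by rewrite mulrA divff ?gt_eqF // mul1r.
have s0 : 0 <= s by rewrite es mulr_ge0 // ltW.
have ss : s <= r^-1 * s by rewrite ler_peMl // invf_ge1.
split; first split => //.
  have h3 : r * (r^-1 * s) < r * phi x by rewrite ltr_pM2l.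
  rewrite es; apply: (lt_le_trans h3); apply: le_trans (hc x).
  by apply: le_trans rM; rewrite ler_pM2l.
move=> k hk; apply: H.
have e := @bs_coh phi psi chi k x hpsi.
have := hB (iter k theta x); rewrite ler_norml => /andP [a1 a2].
have := hB x; rewrite ler_norml => /andP [b1 b2].
move: hk => /= hk; rewrite /= -/r; lra.
Qed.

End Main.

Theorem proposition3p11 (d : measure_display) (X : measurableType d)
  (R : realType) (mu : probability X R) (theta : X -> X)
  (phi psi : X -> R) (A : set X) :
  measure_preserving mu theta ->
  ceiling phi -> bounded_fun phi ->
  ceiling psi -> bounded_fun psi ->
  hole mu theta A ->
  escape_rate_exists mu theta phi A ->
  escape_rate_exists mu theta psi A ->
  [/\ (forall x, phi x <= psi x) ->
        escape_rate mu theta psi A <= escape_rate mu theta phi A,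
      forall lambda : R, 0 < lambda ->
        escape_rate_exists mu theta (fun x => lambda * phi x) A /\
        escape_rate mu theta (fun x => lambda * phi x) A
          = lambda^-1 * escape_rate mu theta phi A
    & forall chi : X -> R, measurable_fun setT chi -> bounded_fun chi ->
        (forall x, psi x = phi x + chi (theta x) - chi x) ->
        escape_rate mu theta psi A = escape_rate mu theta phi A].
Proof.
move=> [mth _] [mphi [cp [cp0 hcp]]] bphi [mpsi [cq [cq0 hcq]]] bpsi [mA _]
  [pp cvp] [pq cvq].
split.
- move=> hle.
  have h := @surv_cmp _ _ _ mu theta phi psi cp cq A 1 0 cp0 hcp cq0 hcq
     mth mphi mpsi mA ltr01 (lexx 0) _ pp pq.
  have hh : \forall t \near +oo, 1 * survival mu theta phi A (t + 0) <= survival mu theta psi A t.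
    apply: h => t t0 [x s] /= [[h1 h2] H].
    rewrite invr1 mul1r addr0 in h1 h2 H.
    split; first by split => //; apply: lt_le_trans h2 (hle x).
    move=> k hk; apply: H; apply: le_trans hk; exact: bs_mono.
  exact: (@rate_le R _ _ 1 0 ltr01 (lexx 0) pq pp hh cvp cvq).
- move=> lam l0.
  have hlc : forall y, lam * cp <= lam * phi y by move=> y; rewrite ler_pM2l.
  have hs : forall t, 0 <= t -> survival mu theta (fun x => lam * phi x) A t =
      lam * survival mu theta phi A (t / lam).
    move=> t t0.
    have t0' : 0 <= t / lam by rewrite divr_ge0 // ltW.
    rewrite (@survE _ _ _ mu theta _ _ _ _ (mulr_gt0 l0 cp0) hlc t0) (@survE _ _ _ mu theta _ _ _ _ cp0 hcp t0').
    rewrite Gset_scale // prod_scale //; first exact: fine_scale.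
    exact: (@mGset _ _ _ theta phi mth mphi A (t / lam) mA).
  have [hp hc] := @rate_scale R _ _ lam l0 hs pp cvp.
  have hc' : escape_fun mu theta (fun x => lam * phi x) A t @[t --> +oo] -->
     lam^-1 * escape_rate mu theta phi A := hc.
  split.
    split; first exact: hp.
    apply/cvg_ex; exists (lam^-1 * escape_rate mu theta phi A); exact: hc'.
  exact: (cvg_lim _ hc').
- move=> chi mchi bchi hpsi.
  have [Mp [Mp0 hMp]] := bnd_ex _ bphi.
  have [Mq [Mq0 hMq]] := bnd_ex _ bpsi.
  have [B [B0 hB]] := bnd_ex _ bchi.
  have hMp' : forall y, phi y <= Mp by move=> y; apply: le_trans (ler_norm _) (hMp y).
  have hMq' : forall y, psi y <= Mq by move=> y; apply: le_trans (ler_norm _) (hMq y).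
  pose nchi := fun y => - chi y.
  have hphi : forall y, phi y = psi y + nchi (theta y) - nchi y.
    by move=> y; rewrite hpsi /nchi; ring.
  have hB' : forall y, `|nchi y| <= B by move=> y; rewrite /nchi normrN.
  have KK : 0 <= B + B by rewrite addr_ge0.
  have rp : 0 < cq / (Mp + cq) by rewrite divr_gt0 // ltr_wpDl.
  have rq : 0 < cp / (Mq + cp) by rewrite divr_gt0 // ltr_wpDl.
  have h1 := @surv_cmp _ _ _ mu theta phi psi cp cq A _ _ cp0 hcp cq0 hcq
       mth mphi mpsi mA rp KK (@coh_sub _ _ _ theta _ _ _ A _ _ _ Mp0 cq0 hMp' hcq hB hpsi) pp pq.
  have h2 := @surv_cmp _ _ _ mu theta psi phi cq cp A _ _ cq0 hcq cp0 hcp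
       mth mpsi mphi mA rq KK (@coh_sub _ _ _ theta _ _ _ A _ _ _ Mq0 cp0 hMq' hcp hB' hphi) pq pp.
  apply/eqP; rewrite eq_le; apply/andP; split.
  + exact: (@rate_le R _ _ _ _ rp KK pq pp h1 cvp cvq).
  + exact: (@rate_le R _ _ _ _ rq KK pp pq h2 cvq cvp).
Qed.
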